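(* For the English Walrasian mechanism with valuation space $\mathcal{V}=\textsc{Gs}$ and bidding space $\mathcal{B}=\textsc{Gs}$, the Price of Stability is $1$; that is, for every profile $\mathbf{v}\in\textsc{Gs}^n$ of true valuations there exists a pure Nash equilibrium $\mathbf{b}$ with $\sum_i v_i(\mathbf{x}_i(\mathbf{b}))=\max\{\sum_i v_i(\mathbf{y}_i):(\mathbf{y}_i)_i \text{ a partition of the items}\}$.
   Context: There are $m$ items and $n$ agents. A valuation is $v:\{0,1\}^m\to\mathbb{R}_+$ with $v(\mathbf{0})=0$, monotone; extended to $\mathbb{Z}^m_+$ by $v(\mathbf{x})=v(\min(\mathbf{x},\mathbf{1}))$. Demand at prices $\mathbf{p}$: $D_v(\mathbf{p})=\arg\max_{\mathbf{x}\in\{0,1\}^m}[v(\mathbf{x})-\mathbf{p}\cdot\mathbf{x}]$. $v\in\textsc{Gs}$ (gross substitutes) if for all prices $\mathbf{p}\le\mathbf{q}$, $S=\{j:p_j=q_j\}$, and $\mathbf{x}\in D_v(\mathbf{p})$, there is $\mathbf{y}\in D_v(\mathbf{q})$ with $y_j\ge x_j$ for all $j\in S$. For declared $\mathbf{b}=(b_1,\dots,b_n)$, $W^{\mathbf{b}}(\mathbf{x})=\max\{\sum_i b_i(\mathbf{x}_i):\sum_i\mathbf{x}_i\le\mathbf{x},\mathbf{x}_i\in\{0,1\}^m\}$ for $\mathbf{x}\in\mathbb{Z}^m_+$, and $f(\mathbf{y}\mid\mathbf{x})=f(\mathbf{y}+\mathbf{x})-f(\mathbf{x})$. English Walrasian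 mechanism: agents report $b_i\in\mathcal{B}$; allocation is a partition maximizing $\sum_i b_i(\mathbf{x}_i)$; payment $\pi_i(\mathbf{b})=\sum_{j: x_{ij}(\mathbf{b})=1}W^{\mathbf{b}}(\mathbf{1}_j\mid\mathbf{1})$. Utility $u_i(v_i;\mathbf{b})=v_i(\mathbf{x}_i(\mathbf{b}))-\pi_i(\mathbf{b})$. Pure Nash equilibrium: no agent can increase his utility by unilaterally changing his report within $\mathcal{B}$. The Price of Stability is $\max_{\mathbf{v}}\min_{\mathbf{b}\in\textsc{Nash}(\mathbf{v})}\frac{\sum_i v_i(\mathbf{x}^*_i(\mathbf{v}))}{\sum_i v_i(\mathbf{x}_i(\mathbf{b}))}$ where $\mathbf{x}^*(\mathbf{v})$ is a welfare-maximizing partition (taken to be $1$ if no Nash equilibrium exists). *)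

(* Defs.v *)
From mathcomp Require Import all_boot all_order all_algebra.
From mathcomp Require Import reals.
Set Implicit Arguments. Unset Strict Implicit. Unset Printing Implicit Defensive.
Import Order.TTheory GRing.Theory Num.Theory.
Local Open Scope ring_scope.

Section EW.
Variables (R : realType) (m n : nat).

(* A bundle x in {0,1}^m is a subset of the items 'I_m. *)
Definition valuation := {set 'I_m} -> R.
Definition profile := 'I_n -> valuation.

Definition is_valuation (v : valuation) : Prop :=
  v set0 = 0 /\ (forall S : {set 'I_m}, 0 <= v S) /\ (forall S T : {set 'I_m}, S \subset T -> v S <= v T).

Definition cost (p : 'I_m -> R) (S : {set 'I_m}) : R := \sum_(j in S) p j.

Definition in_demand (v : valuation) (p : 'I_m -> R) (S : {set 'I_m}) : Prop :=
  forall T : {set 'I_m}, v T - cost p T <= v S - cost p S.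

Definition GS (v : valuation) : Prop :=
  is_valuation v /\
  forall (p q : 'I_m -> R), (forall j, p j <= q j) ->
  forall X : {set 'I_m}, in_demand v p X ->
  exists Y, in_demand v q Y /\
            (forall j, p j = q j -> j \in X -> j \in Y).

(* W^b(x) for a multiplicity vector x in Z_+^m: each agent receives a 0/1
   bundle, and item j is handed out at most x_j times in total. *)
Definition feasible_mult (x : 'I_m -> nat) (f : {ffun 'I_n -> {set 'I_m}}) : bool :=
  [forall j, #|[set i | j \in f i]| <= x j]%N.

Definition W (b : profile) (x : 'I_m -> nat) : R :=
  \big[Num.max/ \sum_i b i set0]_(f | feasible_mult x f) \sum_i b i (f i).

Definition ones : 'I_m -> nat := fun _ => 1%N.
Definition ones_plus (j : 'I_m) : 'I_m -> nat := fun k => if k == j then 2%N else 1%N.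

Definition marg (b : profile) (j : 'I_m) : R := W b (ones_plus j) - W b ones.

Definition assignment := {ffun 'I_m -> 'I_n}.
Definition bundle (a : assignment) (i : 'I_n) : {set 'I_m} := [set j | a j == i].
Definition welfare (v : profile) (a : assignment) : R := \sum_i v i (bundle a i).

Definition maximizing_rule (alloc : profile -> assignment) : Prop :=
  forall b : profile, (forall i, GS (b i)) ->
  forall a, welfare b a <= welfare b (alloc b).

Definition payment (alloc : profile -> assignment) (b : profile) (i : 'I_n) : R :=
  \sum_(j | alloc b j == i) marg b j.

Definition utility (alloc : profile -> assignment) (vi : valuation) (b : profile) (i : 'I_n) : R :=
  vi (bundle (alloc b) i) - payment alloc b i.

Definition upd (b : profile) (i : 'I_n) (bi : valuation) : profile :=
  fun k => if k == i then bi else b k.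

Definition Nash (alloc : profile -> assignment) (v : profile) (b : profile) : Prop :=
  (forall i, GS (b i)) /\
  forall i (bi : valuation), GS bi ->
    utility alloc (v i) (upd b i bi) i <= utility alloc (v i) b i.

End EW.

(* Main.v *)
Require Import Defs.
From mathcomp Require Import all_boot all_order all_algebra.
From mathcomp Require Import reals.
From mathcomp Require Import lra.
Import Order.TTheory GRing.Theory Num.Theory.
Local Open Scope ring_scope.

Section H.
Variables (R : realType) (m n : nat).
Implicit Types (b : profile R m n).

Lemma W_ge b x f : feasible_mult x f -> \sum_i b i (f i) <= W b x.
Proof. move=> Hf; rewrite /W; exact: (le_bigmax_cond _ _ Hf). Qed.

Lemma W_le b x y : \sum_i b i set0 <= y ->
  (forall f, feasible_mult x f -> \sum_i b i (f i) <= y) -> W b x <= y.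
Proof. by move=> H0 H; rewrite /W; apply/bigmax_leP; split. Qed.

Lemma feas_ones_plus j (f : {ffun 'I_n -> {set 'I_m}}) : feasible_mult (@ones m) f -> feasible_mult (ones_plus j) f.
Proof.
move=> /forallP H; apply/forallP => k; apply: leq_trans (H k) _.
by rewrite /ones /ones_plus; case: ifP.
Qed.

Lemma feas0 x : feasible_mult x [ffun _ : 'I_n => (set0 : {set 'I_m})].
Proof.
apply/forallP=> k; apply: leq_trans (leq0n (x k)); rewrite leqn0 cards_eq0.
by apply/eqP/setP=> i; rewrite !inE ffunE inE.
Qed.

Lemma marg_ge0 b j : 0 <= marg b j.
Proof.
rewrite /marg subr_ge0; apply: W_le.
  have := @W_ge b _ _ (feas0 (ones_plus j)).
  by under eq_bigr do rewrite ffunE.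
by move=> f Hf; apply: W_ge; apply: feas_ones_plus.
Qed.


Lemma welfare_sum (g : 'I_n -> 'I_m -> R) (a : assignment m n) :
  \sum_l \sum_(j in bundle a l) g l j = \sum_j g (a j) j.
Proof.
rewrite (partition_big a xpredT) //=; apply: eq_bigr => l _.
apply: eq_big => [j|j]; rewrite inE //; by move/eqP->.
Qed.

Lemma W_le_welfare b (a0 : assignment m n) (y : R) :
  (forall l (S T : {set 'I_m}), S \subset T -> b l S <= b l T) ->
  (forall a, welfare b a <= y) -> W b (@ones m) <= y.
Proof.
move=> Hmon Hy.
have H : forall f, feasible_mult (@ones m) f -> \sum_i b i (f i) <= y.
  move=> f /forallP Hf.
  pose a : assignment m n := [ffun j => odflt (a0 j) [pick l | j \in f l]].
  apply: le_trans (Hy a); rewrite /welfare; apply: ler_sum => l _; apply: Hmon.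
  apply/subsetP => j Hj; rewrite inE /a ffunE.
  case: pickP => [l' Hl'|/(_ l)]; last by rewrite Hj.
  have := Hf j; rewrite /ones => /card_le1_eqP Heq.
  by apply/eqP; apply: Heq; rewrite inE.
apply: W_le => //.
have := H _ (feas0 (@ones m)); by under eq_bigr do rewrite ffunE.
Qed.


Definition addv (w : 'I_m -> R) : valuation R m := fun S => \sum_(j in S) w j.

Lemma addv_diff (w p : 'I_m -> R) S : addv w S - cost p S = \sum_(j in S) (w j - p j).
Proof. by rewrite /addv /cost sumrB. Qed.

Lemma addv_mono (w : 'I_m -> R) (S T : {set 'I_m}) : (forall j, 0 <= w j) ->
  S \subset T -> addv w S <= addv w T.
Proof.
move=> Hw /subsetP HST; rewrite /addv [X in X <= _]big_mkcond [X in _ <= X]big_mkcond.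
apply: ler_sum => j _; case: ifP => HS; first by rewrite (HST _ HS).
by case: ifP.
Qed.

Lemma GS_add (w : 'I_m -> R) : (forall j, 0 <= w j) -> GS (addv w).
Proof.
move=> Hw; split.
  split; first by rewrite /addv big_set0.
  split; first by move=> S; rewrite /addv; apply: sumr_ge0.
  by move=> S T; apply: addv_mono.
move=> p q Hpq X HX; exists [set j | 0 <= w j - q j]; split.
  move=> T; rewrite !addv_diff [X in X <= _]big_mkcond [X in _ <= X]big_mkcond.
  apply: ler_sum => j _; rewrite inE; case: ifP => _; case: ifP => //.
  by move/negbT; rewrite -ltNge => /ltW.
move=> j Hpqj HjX; rewrite inE -Hpqj.
have := HX (X :\ j); rewrite !addv_diff (bigD1 j HjX) /=.
have -> : \sum_(i in X :\ j) (w i - p i) = \sum_(i in X | i != j) (w i - p i).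
  by apply: eq_bigl => i; rewrite !inE andbC.
by rewrite lerDr.
Qed.


Lemma exists_opt (v : profile R m n) (a0 : assignment m n) :
  exists astar : assignment m n, forall a, welfare v a <= welfare v astar.
Proof.
case: (@arg_maxP _ _ _ a0 xpredT (welfare v) isT) => a _ H.
by exists a => a'; apply: H.
Qed.

Section Construction.
Variables (astar : assignment m n) (c : R).
Hypothesis c_gt0 : 0 < c.

Definition wt (l : 'I_n) (j : 'I_m) : R := if astar j == l then c else 0.
Definition bb : profile R m n := fun l => addv (wt l).

Lemma wt_ge0 l j : 0 <= wt l j.
Proof. by rewrite /wt; case: ifP => // _; apply: ltW. Qed.

Lemma wt_le l j : wt l j <= c.
Proof. by rewrite /wt; case: ifP => // _; apply: ltW. Qed.

Lemma GS_bb l : GS (bb l).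
Proof. by apply: GS_add => j; apply: wt_ge0. Qed.

Lemma welfare_bb a : welfare bb a = \sum_j wt (a j) j.
Proof. by rewrite /welfare /bb /addv welfare_sum. Qed.

Lemma welfare_bb_star : welfare bb astar = \sum_(j < m) c.
Proof. by rewrite welfare_bb; apply: eq_bigr => j _; rewrite /wt eqxx. Qed.

Lemma bb_max_eq a : welfare bb astar <= welfare bb a -> a = astar.
Proof.
rewrite welfare_bb_star welfare_bb => H; apply/ffunP => j.
apply/eqP; case: eqP => // /eqP Hne; exfalso.
move: H; apply/negP; rewrite -ltNge.
rewrite (bigD1 j) //= [X in _ < X](bigD1 j) //=.
apply: ltr_leD; first by rewrite /wt eq_sym (negbTE Hne).
by apply: ler_sum => k _; apply: wt_le.
Qed.

Lemma W_bb_le x : W bb x <= \sum_(j < m) c.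
Proof.
apply: W_le.
  rewrite /bb /addv; under eq_bigr do rewrite big_set0.
  by rewrite big1 // sumr_ge0 // => j _; apply: ltW.
move=> f _; rewrite /bb /addv.
under eq_bigr do rewrite big_mkcond.
rewrite exchange_big /=; apply: ler_sum => j _.
apply: le_trans (_ : \sum_l (if l == astar j then c else 0) <= _).
  apply: ler_sum => l _; case: ifP => _; last by case: ifP => // _; apply: ltW.
  by rewrite /wt eq_sym; case: ifP.
by rewrite -big_mkcond /= big_pred1_eq.
Qed.

Lemma W_bb_ge : \sum_(j < m) c <= W bb (@ones m).
Proof.
rewrite -welfare_bb_star.
have Hf : feasible_mult (@ones m) [ffun l => bundle astar l].
  apply/forallP => j; rewrite /ones.
  have -> : [set i | j \in [ffun l => bundle astar l] i] = [set astar j].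
    by apply/setP => i; rewrite !inE ffunE inE eq_sym.
  by rewrite cards1.
have := @W_ge bb _ _ Hf; by under eq_bigr do rewrite ffunE.
Qed.

Lemma marg_bb j : marg bb j = 0.
Proof.
apply/eqP; rewrite eq_le marg_ge0 andbT /marg subr_le0.
exact: le_trans (W_bb_le _) W_bb_ge.
Qed.

End Construction.


Lemma marg_steal (b : profile R m n) (a : assignment m n) j0 k :
  (forall l (S T : {set 'I_m}), S \subset T -> b l S <= b l T) ->
  (forall a', welfare b a' <= welfare b a) -> a j0 != k ->
  b k (j0 |: bundle a k) - b k (bundle a k) <= marg b j0.
Proof.
move=> Hmon Hopt Hne.
pose f := [ffun l => if l == k then j0 |: bundle a l else bundle a l].
have Hf : feasible_mult (ones_plus j0) f.
  apply/forallP => j; rewrite /ones_plus.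
  case: eqP => [->|/eqP Hj].
    apply: leq_trans (_ : (#|[set a j0; k]| <= 2)%N); last by rewrite cards2; case: (_ != _).
    apply: subset_leq_card; apply/subsetP => l; rewrite !inE ffunE.
    case: eqP => [->|_]; rewrite ?eqxx ?orbT // inE.
    by rewrite eq_sym orbF.
  apply: leq_trans (_ : (#|[set a j]| <= 1)%N); last by rewrite cards1.
  apply: subset_leq_card; apply/subsetP => l; rewrite !inE ffunE.
  case: eqP => _; rewrite ?inE ?(negbTE Hj) //=; by rewrite eq_sym.
have HW1 := @W_le_welfare b a _ Hmon Hopt.
have HW2 := @W_ge b _ _ Hf.
rewrite /marg; apply: le_trans (_ : \sum_i b i (f i) - welfare b a <= _); last first.
  by apply: lerB.
have -> : \sum_i b i (f i) - welfare b a =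
    b k (j0 |: bundle a k) - b k (bundle a k).
  rewrite /welfare (bigD1 k) //= [X in _ - X](bigD1 k) //= ffunE eqxx.
  rewrite (_ : \sum_(i | i != k) b i (f i) = \sum_(i | i != k) b i (bundle a i)).
    by rewrite opprD addrACA subrr addr0.
  by apply: eq_bigr => i /negbTE Hi; rewrite ffunE Hi.
by [].
Qed.

End H.

Theorem corollary1 (R : realType) (m n : nat)
  (alloc : profile R m n -> assignment m n) :
  maximizing_rule alloc ->
  forall v : profile R m n, (forall i, GS (v i)) ->
  exists b : profile R m n,
    Nash alloc v b /\
    (forall a : assignment m n, welfare v a <= welfare v (alloc b)).
Proof.
move=> Hmax v Hv.
have a0 : assignment m n := alloc v.
case: (@exists_opt _ _ _ v a0) => astar Hstar.
pose c : R := 1 + \sum_l v l setT.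
have Hvc : forall i S, v i S < c.
  move=> i S; have [_ [Hnn Hmon]] := (Hv i).1.
  apply: le_lt_trans (Hmon _ _ (subsetT S)) _.
  rewrite /c (bigD1 i) //= addrA.
  have : 0 <= \sum_(i0 < n | i0 != i) v i0 [set: 'I_m].
    by rewrite sumr_ge0 // => l _; case: (Hv l).1 => _ [].
  lra.
have c_gt0 : 0 < c.
  by rewrite /c; apply: (lt_le_trans ltr01); rewrite lerDl sumr_ge0 // => l _; case: (Hv l).1 => _ [].
pose b := @bb R m n astar c.
have Hb : forall l, GS (b l) by move=> l; apply: GS_bb.
have Halloc : alloc b = astar.
  by apply: (@bb_max_eq _ _ _ astar c c_gt0); apply: Hmax.
exists b; split; last by rewrite Halloc.
split => // i bi Hbi.
have Hpay0 : payment alloc b i = 0.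
  by rewrite /payment big1 // => j _; apply: marg_bb.
rewrite /utility Hpay0 subr0 Halloc.
set b' := upd b i bi.
have Hb' : forall l, GS (b' l) by move=> l; rewrite /b' /upd; case: ifP.
set a' := alloc b'.
have Hopt := Hmax b' Hb'.
have Hmon' : forall l (S T : {set 'I_m}), S \subset T -> b' l S <= b' l T.
  by move=> l; have [_ [_ Hm]] := (Hb' l).1.
have Hvi := (Hv i).1; case: Hvi => _ [Hnn Hmon].
have Hpay_ge0 : 0 <= payment alloc b' i.
  by rewrite /payment sumr_ge0 // => j _; apply: marg_ge0.
case: (boolP [forall j, (a' j == i) ==> (astar j == i)]) => H.
  rewrite -[X in _ <= X]subr0; apply: lerB => //; apply: Hmon.
  apply/subsetP => j; rewrite !inE => Hj.
  by move/forallP: H => /(_ j) /implyP; apply.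
move/forallPn: H => [j0]; rewrite negb_imply => /andP [/eqP Ha Hs].
have Hne : a' j0 != astar j0 by rewrite Ha eq_sym.
have Hm := @marg_steal _ _ _ b' a' j0 (astar j0) Hmon' Hopt Hne.
have Hk : b' (astar j0) = @addv R m (@wt R m n astar c (astar j0)).
  by rewrite /b' /upd (negbTE Hs).
have Hnot : j0 \notin bundle a' (astar j0) by rewrite inE Ha eq_sym.
rewrite Hk /addv (big_setU1 _ Hnot) /= addrK /wt eqxx in Hm.
have Hpc : c <= payment alloc b' i.
  apply: le_trans Hm _; rewrite /payment (bigD1 j0) /=; last by rewrite -/a' Ha.
  by rewrite lerDl sumr_ge0 // => j _; apply: marg_ge0.
apply: le_trans (_ : 0 <= _); last by apply: Hnn.
rewrite subr_le0; apply: ltW; apply: lt_le_trans (Hvc _ _) Hpc.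
Qed.
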